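(* Let $a,n\in\mathbb{N}$, let $k_1,\ldots,k_n\in\mathbb{N}$, let $f_1,\ldots,f_n$, $g_1,\ldots,g_n$, $h_1,\ldots,h_n$ be arbitrary arithmetic functions, and let $\omega$ be a completely multiplicative function. Then $$U_{\omega}^{(a)}(k_1,\ldots,k_n)=\sum_{d_1|k_1,\ldots,d_n|k_n}\omega(M)^a\Bigl(\prod_{i=1}^n f_i(d_i)\,g_i\Bigl(\frac{k_i}{d_i}\Bigr)\Bigr)\sum_{\ell=1}^{L^a}\omega(\ell)\prod_{i=1}^n h_i\Bigl(\Bigl(\frac{M}{d_i}\Bigr)^a\ell\Bigr),$$ where in each summand $M=\operatorname{lcm}(d_1,\ldots,d_n)$ and $L=K/M$. If in addition $h_1,\ldots,h_n$ are completely multiplicative, then $$U_{\omega}^{(a)}(k_1,\ldots,k_n)=\sum_{d_1|k_1,\ldots,d_n|k_n}\omega(M)^a\Bigl(\prod_{i=1}^n f_i(d_i)\,g_i\Bigl(\frac{k_i}{d_i}\Bigr)h_i\Bigl(\frac{M}{d_i}\Bigr)^a\Bigr)\sum_{\ell=1}^{L^a}\omega(\ell)\prod_{i=1}^n h_i(\ell).$$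
   Context: An arithmetic function is a map $\mathbb{N}\to\mathbb{C}$. A function $\omega$ is completely multiplicative if $\omega(1)=1$ and $\omega(mn)=\omega(m)\omega(n)$ for all $m,n\in\mathbb{N}$. For $a\in\mathbb{N}$ and arithmetic functions $f,g,h$, the generalized Anderson–Apostol sum is $s^{(a)}_{f,g,h}(k,j)=\sum_{d|k,\ d^a|j} f(d)\,g(k/d)\,h(j/d^a)$ for $k,j\in\mathbb{N}$. Given $k_1,\ldots,k_n\in\mathbb{N}$, put $K=\operatorname{lcm}(k_1,\ldots,k_n)$ and $U_{\omega}^{(a)}(k_1,\ldots,k_n)=\sum_{j=1}^{K^a}\omega(j)\prod_{i=1}^n s^{(a)}_{f_i,g_i,h_i}(k_i,j)$. *)

(* Defs.v *)
(* arithmetic functions are maps nat -> algC (values at 0 irrelevant). *)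
From HB Require Import structures.
From mathcomp Require Import all_boot all_order all_algebra all_field.
Set Implicit Arguments. Unset Strict Implicit. Unset Printing Implicit Defensive.
Import Order.TTheory GRing.Theory Num.Theory.
Local Open Scope ring_scope.

Definition compl_mult (w : nat -> algC) : Prop :=
  w 1%N = 1 /\ forall m n : nat, (0 < m)%N -> (0 < n)%N -> w (m * n)%N = w m * w n.

Definition AAsum (a : nat) (f g h : nat -> algC) (k j : nat) : algC :=
  \sum_(d <- divisors k | (d ^ a %| j)%N) f d * g (k %/ d)%N * h (j %/ d ^ a)%N.

Definition lcm_fam (n : nat) (k : 'I_n -> nat) : nat := \big[lcmn/1%N]_(i < n) k i.

Definition Usum (a n : nat) (f g h : 'I_n -> nat -> algC) (w : nat -> algC)
    (k : 'I_n -> nat) : algC :=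
  \sum_(1 <= j < (lcm_fam k) ^ a + 1)
     w j * \prod_(i < n) AAsum a (f i) (g i) (h i) (k i) j.

(* Main.v *)
Require Import Defs.
From HB Require Import structures.
From mathcomp Require Import all_boot all_order all_algebra all_field.
From mathcomp Require Import zify ring.
Import Order.TTheory GRing.Theory Num.Theory.
Local Open Scope ring_scope.

Lemma gcdn_exp_aux a g x y : coprime x y ->
  gcdn ((x * g) ^ a) ((y * g) ^ a) = (g ^ a)%N.
Proof.
move=> cop; rewrite !expnMn -muln_gcdl.
have : coprime (x ^ a) (y ^ a).
  case: a => [|a]; first by rewrite !expn0 /coprime gcdnn.
  by rewrite coprime_pexpl // coprime_pexpr.
by move/eqP ->; rewrite mul1n.
Qed.

Lemma gcdn_exp a x y : (0 < x)%N -> gcdn (x ^ a) (y ^ a) = (gcdn x y ^ a)%N.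
Proof.
move=> x0; have g0 : (0 < gcdn x y)%N by rewrite gcdn_gt0 x0.
have cop : coprime (x %/ gcdn x y) (y %/ gcdn x y).
  apply/eqP; apply/eqP; rewrite -(eqn_pmul2l g0) muln1 muln_gcdr.
  by rewrite !(mulnC (gcdn x y)) !divnK ?dvdn_gcdl ?dvdn_gcdr.
have := gcdn_exp_aux a (gcdn x y) _ _ cop.
by rewrite !divnK ?dvdn_gcdl ?dvdn_gcdr.
Qed.

Lemma lcmn_exp a x y : (0 < a)%N -> lcmn (x ^ a) (y ^ a) = (lcmn x y ^ a)%N.
Proof.
move=> a0; case: (posnP x) => [->|x0].
  by rewrite exp0n // !lcm0n exp0n.
case: (posnP y) => [->|y0].
  by rewrite exp0n // !lcmn0 exp0n.
have g0 : (0 < gcdn x y ^ a)%N by rewrite expn_gt0 gcdn_gt0 x0.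
apply/eqP; rewrite -(eqn_pmul2r g0); apply/eqP; rewrite -{1}gcdn_exp // muln_lcm_gcd -[in RHS]expnMn muln_lcm_gcd.
by rewrite expnMn.
Qed.

Lemma lcm_fam_exp a n (d : 'I_n -> nat) : (0 < a)%N ->
  (lcm_fam d ^ a)%N = lcm_fam (fun i => d i ^ a)%N.
Proof.
move=> a0; rewrite /lcm_fam.
apply: (big_morph (fun x => x ^ a)%N); first by move=> x y; rewrite lcmn_exp.
by rewrite exp1n.
Qed.

Lemma dvd_lcm_fam n (k : 'I_n -> nat) i : (k i %| lcm_fam k)%N.
Proof. by apply: (biglcmn_sup i). Qed.

Lemma lcm_fam_dvdP n (k : 'I_n -> nat) m :
  reflect (forall i, k i %| m)%N (lcm_fam k %| m)%N.
Proof.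
rewrite /lcm_fam; apply: (iffP idP) => [/dvdn_biglcmP H i | H]; first exact: H.
by apply/dvdn_biglcmP => i _; apply: H.
Qed.

Lemma lcm_fam_gt0 n (k : 'I_n -> nat) : (forall i, 0 < k i)%N -> (0 < lcm_fam k)%N.
Proof.
move=> H; rewrite /lcm_fam; elim/big_ind: _ => // x y.
by rewrite lcmn_gt0 => -> ->.
Qed.

Lemma sum_mult (F : nat -> algC) m q : (0 < m)%N ->
  \sum_(1 <= j < m * q + 1 | (m %| j)%N) F j = \sum_(1 <= l < q + 1) F (m * l)%N.
Proof.
move=> m0; elim: q => [|q IH].
  by rewrite muln0 !big_geq.
rewrite (@big_cat_nat _ _ _ (m * q + 1)) //=; last by nia.
rewrite IH [in RHS](@big_cat_nat _ _ _ (q + 1)) //=; last by lia.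
congr (_ + _).
rewrite big_nat1.
have -> : (m * q.+1 + 1 = (m * q + m).+1)%N by rewrite mulnS; lia.
rewrite big_mkcond big_nat_recr /=; last by lia.
rewrite big1_seq ?add0r; last first.
  move=> j; rewrite mem_index_iota => /andP [_ /andP [lo hi]].
  case: ifP => // Hj; exfalso; move: Hj.
  have -> : j = (m * q + (j - m * q))%N by lia.
  rewrite dvdn_addr ?dvdn_mulr // => /dvdn_leq.
  have hpos : (0 < j - m * q)%N by lia.
  move=> /(_ hpos); lia.
by rewrite dvdn_addr ?dvdn_mulr ?dvdnn // addn1 mulnS addnC.
by lia.
Qed.

Lemma cm_exp (w : nat -> algC) a x : compl_mult w -> (0 < x)%N -> w (x ^ a)%N = w x ^+ a.
Proof.
move=> [w1 wM] x0; elim: a => [|a IH]; first by rewrite expn0 expr0.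
by rewrite expnS wM ?expn_gt0 ?x0 // IH exprS.
Qed.

Lemma div_exp_aux x d l a : (0 < d)%N -> (d %| x)%N ->
  ((x ^ a * l) %/ d ^ a = (x %/ d) ^ a * l)%N.
Proof.
move=> d0 /divnK {1}<-.
by rewrite expnMn mulnAC mulnK // expn_gt0 d0.
Qed.

Lemma prod_if n (c : 'I_n -> bool) (v : 'I_n -> algC) :
  \prod_(i < n) (if c i then v i else 0) = if [forall i, c i] then \prod_(i < n) v i else 0.
Proof.
case: ifP => [/forallP H | /negbT].
  by apply: eq_bigr => i _; rewrite H.
rewrite negb_forall => /existsP [i /negbTE ci].
by rewrite (bigD1 i) //= ci mul0r.
Qed.

Lemma AAsum_ord a (f g h : nat -> algC) k j K : (0 < k)%N -> (0 < K)%N -> (k %| K)%N ->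
  AAsum a f g h k j = \sum_(x < K.+1)
     (if (x %| k)%N && (x ^ a %| j)%N then f x * g (k %/ x)%N * h (j %/ x ^ a)%N else 0).
Proof.
move=> k0 K0 kK; rewrite -big_mkcond /= -(big_mkord (fun x => (x %| k)%N && (x ^ a %| j)%N)
   (fun x => f x * g (k %/ x)%N * h (j %/ x ^ a)%N)).
rewrite -big_filter_cond /AAsum; apply: perm_big; apply: uniq_perm.
- exact: divisors_uniq.
- by rewrite filter_uniq // iota_uniq.
move=> x; rewrite -dvdn_divisors // mem_filter mem_iota /= add0n.
case Hx: (x %| k)%N => //=.
by rewrite ltnS (leq_trans (dvdn_leq k0 Hx)) // dvdn_leq.
Qed.

Lemma part1 (a n : nat) (k : 'I_n -> nat) (f g h : 'I_n -> nat -> algC)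
    (w : nat -> algC) :
  (0 < a)%N -> (forall i, 0 < k i)%N -> compl_mult w ->
  (Usum a f g h w k =
     \sum_(d : {ffun 'I_n -> 'I_(lcm_fam k).+1} | [forall i, (d i %| k i)%N])
       w (lcm_fam (fun i => nat_of_ord (d i))) ^+ a *
       (\prod_(i < n) (f i (d i) * g i (k i %/ d i)%N)) *
       \sum_(1 <= l < (lcm_fam k %/ lcm_fam (fun i => nat_of_ord (d i))) ^ a + 1)
          w l * \prod_(i < n)
                  h i ((lcm_fam (fun i => nat_of_ord (d i)) %/ d i) ^ a * l)%N).
Proof.
move=> a0 k0 wc; have [w1 wM] := wc.
set K := lcm_fam k.
have kK i : (k i %| K)%N by apply: dvd_lcm_fam.
have K0 : (0 < K)%N by apply: lcm_fam_gt0.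
rewrite /Usum.
have step1 j : \prod_(i < n) AAsum a (f i) (g i) (h i) (k i) j =
  \sum_(d : {ffun 'I_n -> 'I_K.+1})
    (if [forall i, (d i %| k i)%N && (d i ^ a %| j)%N] then
       \prod_(i < n) (f i (d i) * g i (k i %/ d i)%N * h i (j %/ d i ^ a)%N) else 0).
  rewrite (eq_bigr _ (fun i _ => AAsum_ord a (f i) (g i) (h i) (k i) j K (k0 i) K0 (kK i))).
  rewrite bigA_distr_bigA; apply: eq_bigr => d _; exact: prod_if.
under eq_bigr do rewrite step1 big_distrr.
rewrite exchange_big /= [RHS]big_mkcond; apply: eq_bigr => d _.
case: ifP => Hd; last first.
  apply: big1 => j _.
  have -> : [forall i, (d i %| k i)%N && (d i ^ a %| j)%N] = false.
    apply/negbTE; apply: contraFN Hd => /forallP H; apply/forallP => i.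
    by case/andP: (H i).
  by rewrite mulr0.
set M := lcm_fam (fun i => nat_of_ord (d i)).
have d0 i : (0 < d i)%N.
  have := forallP Hd i; case: (posnP (d i)) => // ->.
  by rewrite dvd0n => /eqP e; have := k0 i; rewrite e.
have M0 : (0 < M)%N by apply: lcm_fam_gt0.
have dM i : (d i %| M)%N by exact: (@dvd_lcm_fam _ (fun i => nat_of_ord (d i)) i).
have MK : (M %| K)%N.
  apply/lcm_fam_dvdP => i; exact: dvdn_trans (forallP Hd i) (kK i).
have Hc j : [forall i, (d i %| k i)%N && (d i ^ a %| j)%N] = (M ^ a %| j)%N.
  rewrite /M lcm_fam_exp //; apply/forallP/lcm_fam_dvdP => H i.
    by case/andP: (H i).
  by rewrite (forallP Hd i) H.
rewrite (eq_bigr (fun j => if (M ^ a %| j)%N then w j *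
     \prod_(i < n) (f i (d i) * g i (k i %/ d i)%N * h i (j %/ d i ^ a)%N) else 0));
  last by move=> j _; rewrite Hc; case: ifP; rewrite ?mulr0.
rewrite -big_mkcond /=.
have -> : (K ^ a = M ^ a * (K %/ M) ^ a)%N by rewrite -expnMn mulnC divnK.
rewrite sum_mult ?expn_gt0 ?M0 // big_distrr /=.
apply: eq_big_nat => l /andP [l1 _].
rewrite wM ?expn_gt0 ?M0 // cm_exp //.
under eq_bigr do rewrite div_exp_aux ?d0 ?dM //.
rewrite big_split /=.
ring.
Qed.

Theorem theorem1 (a n : nat) (k : 'I_n -> nat) (f g h : 'I_n -> nat -> algC)
    (w : nat -> algC) :
  (0 < a)%N -> (0 < n)%N -> (forall i, 0 < k i)%N -> compl_mult w ->
  (Usum a f g h w k =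
     \sum_(d : {ffun 'I_n -> 'I_(lcm_fam k).+1} | [forall i, (d i %| k i)%N])
       w (lcm_fam (fun i => nat_of_ord (d i))) ^+ a *
       (\prod_(i < n) (f i (d i) * g i (k i %/ d i)%N)) *
       \sum_(1 <= l < (lcm_fam k %/ lcm_fam (fun i => nat_of_ord (d i))) ^ a + 1)
          w l * \prod_(i < n)
                  h i ((lcm_fam (fun i => nat_of_ord (d i)) %/ d i) ^ a * l)%N)
  /\
  ((forall i, compl_mult (h i)) ->
   Usum a f g h w k =
     \sum_(d : {ffun 'I_n -> 'I_(lcm_fam k).+1} | [forall i, (d i %| k i)%N])
       w (lcm_fam (fun i => nat_of_ord (d i))) ^+ a *
       (\prod_(i < n) (f i (d i) * g i (k i %/ d i)%N *
                       h i (lcm_fam (fun i => nat_of_ord (d i)) %/ d i)%N ^+ a)) *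
       \sum_(1 <= l < (lcm_fam k %/ lcm_fam (fun i => nat_of_ord (d i))) ^ a + 1)
          w l * \prod_(i < n) h i l).
Proof.
move=> a0 _ k0 wc.
have P1 := part1 _ _ k f g h w a0 k0 wc.
split => //.
move=> hc; rewrite P1; apply: eq_bigr => d Hd.
set M := lcm_fam (fun i => nat_of_ord (d i)).
have d0 i : (0 < d i)%N.
  have := forallP Hd i; case: (posnP (d i)) => // ->.
  by rewrite dvd0n => /eqP e; have := k0 i; rewrite e.
have M0 : (0 < M)%N by apply: lcm_fam_gt0.
have dM i : (d i %| M)%N by exact: (@dvd_lcm_fam _ (fun i => nat_of_ord (d i)) i).
have q0 i : (0 < M %/ d i)%N by rewrite divn_gt0 ?d0 // dvdn_leq.
set C := \prod_(i < n) h i (M %/ d i)%N ^+ a.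
have E : \sum_(1 <= l < (lcm_fam k %/ M) ^ a + 1)
          w l * \prod_(i < n) h i ((M %/ d i) ^ a * l)%N =
   C * \sum_(1 <= l < (lcm_fam k %/ M) ^ a + 1) (w l * \prod_(i < n) h i l).
  rewrite big_distrr /=; apply: eq_big_nat => l /andP [l1 _].
  rewrite (eq_bigr (fun i => h i (M %/ d i)%N ^+ a * h i l)); last first.
    move=> i _; have [_ hMi] := hc i.
    by rewrite hMi ?expn_gt0 ?q0 // cm_exp.
  by rewrite big_split /= mulrCA.
rewrite E.
rewrite [in RHS]big_split /= /C.
ring.
Qed.
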